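(* For every integer $k\ge2$ there exist a set $V$ with $|V|=k^2$ and a partial orientation $o$ on $V$ such that: (i) among any four distinct elements of $V$ some three $x,y,z$ satisfy $o(xyz)=0$; (ii) for all distinct $A,B,C,D\in V$, $o(ABD)=o(BCD)=o(CAD)=1$ implies $o(ABC)=1$; (iii) for all distinct $A,B,C,D\in V$, if $o(ABC)=o(ABD)=0$, $o(ACD)\ne0$ and $o(BCD)\ne0$, then $o(ACD)=o(BCD)$; and (iv) the largest subset $S\subseteq V$ such that $o(xyz)=0$ for all distinct $x,y,z\in S$ has exactly $2k-1$ elements.
   Context: A partial orientation on $V$ is a map $o$ from ordered triples of distinct elements of $V$ to $\{+1,0,-1\}$ with $o(uvw)=o(wuv)=o(vwu)=-o(uwv)=-o(vuw)=-o(wvu)$. *)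

(* Defs.v *)
From mathcomp Require Import all_boot all_order all_algebra.
Set Implicit Arguments. Unset Strict Implicit. Unset Printing Implicit Defensive.
Import GRing.Theory Num.Theory.
Local Open Scope ring_scope.

(* A ternary map on V; only its values on triples of distinct elements matter. *)
Definition pairwise_distinct3 (V : eqType) (x y z : V) : bool :=
  [&& x != y, y != z & x != z].

Definition partial_orientation (V : eqType) (o : V -> V -> V -> int) : Prop :=
  forall u v w : V, pairwise_distinct3 u v w ->
    o u v w \in [:: 1; 0; -1] /\
    o u v w = o w u v /\ o u v w = o v w u /\
    o u v w = - o u w v /\ o u v w = - o v u w /\ o u v w = - o w v u.

Definition null_set (V : finType) (o : V -> V -> V -> int) (S : {set V}) : Prop :=
  forall x y z, x \in S -> y \in S -> z \in S -> pairwise_distinct3 x y z ->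
    o x y z = 0.

Definition pairwise_distinct4 (V : eqType) (a b c d : V) : bool :=
  [&& a != b, a != c, a != d, b != c, b != d & c != d].

(* Main.v *)
Require Import Defs.
From mathcomp Require Import all_boot all_order all_algebra.
Import GRing.Theory Num.Theory.
Set Implicit Arguments. Unset Strict Implicit.
Local Open Scope ring_scope.

Definition cyc (V : Type) (E : V -> V -> bool) x y z := [&& E x y, E y z & E z x].
Definition ori (V : Type) (E : V -> V -> bool) x y z : int :=
  (cyc E x y z : nat)%:Z - (cyc E z y x : nat)%:Z.

Lemma ori_po (V : eqType) (E : V -> V -> bool) : partial_orientation (ori E).
Proof.
move=> u v w _; rewrite /ori /cyc.
case: (E u v); case: (E v u); case: (E u w); case: (E w u); case: (E v w); case: (E w v); by [].
Qed.

Section G.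
Variables (V : eqType) (E : V -> V -> bool).
Hypothesis anti : forall x y, ~~ (E x y && E y x).

Lemma ori_i a b c d :
  [|| ori E a b c == 0, ori E a b d == 0, ori E a c d == 0 | ori E b c d == 0].
Proof.
rewrite /ori /cyc.
have := @anti a b; have := @anti b a; have := @anti a c; have := @anti c a;
have := @anti a d; have := @anti d a; have := @anti b c; have := @anti c b;
have := @anti b d; have := @anti d b; have := @anti c d; have := @anti d c.
case: (E a b); case: (E b a); case: (E a c); case: (E c a);
case: (E a d); case: (E d a); case: (E b c); case: (E c b);
case: (E b d); case: (E d b); case: (E c d); case: (E d c); by intros; (done || discriminate).
Qed.

Ltac fin := intros; (done || discriminate || (vm_compute in *; (done || discriminate || congruence))).

Lemma ori_ii A B C D : ori E A B D = 1 -> ori E B C D = 1 -> ori E C A D = 1 -> ori E A B C = 1.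
Proof.
rewrite /ori /cyc.
move: (@anti A B) (@anti A C) (@anti A D) (@anti B C) (@anti B D) (@anti C D).
case: (E A B); case: (E B A); case: (E A C); case: (E C A);
case: (E A D); case: (E D A); case: (E B C); case: (E C B);
case: (E B D); case: (E D B); case: (E C D); case: (E D C); fin.
Qed.

Lemma ori_iii A B C D : ori E A C D != 0 -> ori E B C D != 0 -> ori E A C D = ori E B C D.
Proof.
rewrite /ori /cyc.
move: (@anti A C) (@anti A D) (@anti B C) (@anti B D) (@anti C D).
case: (E A C); case: (E C A);
case: (E A D); case: (E D A); case: (E B C); case: (E C B);
case: (E B D); case: (E D B); case: (E C D); case: (E D C); fin.
Qed.
End G.

From mathcomp Require Import zify.

Section C.
Variable k : nat.
Definition P2 := ('I_k * 'I_k)%type.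
Definition Eg (x y : P2) : bool :=
  [|| ((x.1 == y.1 :> nat) && (x.2 < y.2)%N),
      ((x.2 == y.2 :> nat) && (x.1 < y.1)%N) |
      ((y.1 < x.1)%N && (y.2 < x.2)%N)].

Lemma Eg_anti x y : ~~ (Eg x y && Eg y x).
Proof. rewrite /Eg; lia. Qed.

Lemma neq1 (p q : P2) : (val p.1 != val q.1) -> p != q.
Proof. by apply: contra => /eqP ->. Qed.
Lemma neq2 (p q : P2) : (val p.2 != val q.2) -> p != q.
Proof. by apply: contra => /eqP ->. Qed.
End C.

Lemma bound k (S : {set P2 k}) : null_set (ori (@Eg k)) S -> (0 < k)%N -> (#|S| <= 2 * k - 1)%N.
Proof.
move=> nS k0.
pose i0 : 'I_k := Ordinal k0.
pose P := [set x : P2 k | [forall y in S, ~~ ((y.1 == x.1 :> nat) && (y.2 < x.2)%N)]].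
rewrite -(cardsID P S).
have h1 : (#|S :&: P| <= k)%N.
  rewrite -(@card_in_imset _ _ fst); last first.
    move=> [a b] [a' b']; rewrite !inE /= => /andP[xS /forall_inP xP] /andP[xS' /forall_inP xP'] ea.
    subst a'; have := xP _ xS'; have := xP' _ xS; rewrite /= eqxx /= => h h'.
    have eb : nat_of_ord b = nat_of_ord b' by lia.
    by rewrite (ord_inj eb).
  by rewrite -[k in (_ <= k)%N]card_ord max_card.
have key : forall x x', x \in S :\: P -> x' \in S :\: P -> x.2 = x'.2 -> ~ (x.1 < x'.1)%N.
  move=> x x'; rewrite !inE => /andP[/forall_inPn [y yS]] /negbNE /andP[/eqP e lt] xS.
  move=> /andP[_ x'S] e2 lt1.
  have := nS y x x' yS xS x'S.
  rewrite /pairwise_distinct3 neq2 /=; last by rewrite neq_ltn lt.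
  rewrite neq1 /=; last by rewrite neq_ltn lt1.
  rewrite neq2 /=; last by rewrite -e2 neq_ltn lt.
  rewrite /ori /cyc /Eg.
  case: x x' y xS x'S yS e2 lt1 e lt => [a b] [a' b'] [c d] /= _ _ _ e2 lt1 e lt.
  subst b'.
  have -> : [&& [|| (c == a :> nat) && (d < b)%N, (d == b :> nat) && (c < a)%N | (a < c)%N && (b < d)%N],
       [|| (a == a' :> nat) && (b < b)%N, (b == b :> nat) && (a < a')%N | (a' < a)%N && (b < b)%N]
     & [|| (a' == c :> nat) && (b < d)%N, (b == d :> nat) && (a' < c)%N | (c < a')%N && (d < b)%N]] by lia.
  have -> : [&& [|| (a' == a :> nat) && (b < b)%N, (b == b :> nat) && (a' < a)%N | (a < a')%N && (b < b)%N],
       [|| (a == c :> nat) && (b < d)%N, (b == d :> nat) && (a < c)%N | (c < a)%N && (d < b)%N]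
     & [|| (c == a' :> nat) && (d < b)%N, (d == b :> nat) && (c < a')%N | (a' < c)%N && (b < d)%N]] = false by lia.
  by move=> /(_ isT).
have h2 : (#|S :\: P| < k)%N.
  rewrite -(@card_in_imset _ _ snd); last first.
    move=> x x' xS x'S e.
    case: (ltngtP x.1 x'.1) => h.
    - by case: (key x x' xS x'S e h).
    - by case: (key x' x x'S xS (esym e) h).
    case: x x' xS x'S e h => [a b] [a' b'] /= _ _ -> h.
    by rewrite (ord_inj h).
  rewrite -[k in (_ < k)%N]card_ord -cardsT; apply: proper_card; rewrite properT.
  apply/negP => /eqP hT.
  have : i0 \in snd @: (S :\: P) by rewrite hT inE.
  case/imsetP => x; rewrite !inE => /andP[/forall_inPn [y yS]] /negbNE /andP[_ lt] _ ex.
  by move: lt; rewrite -ex.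
move: h1 h2; move: #|S :&: P| #|S :\: P| => m n; lia.
Qed.

Unset Implicit Arguments.
Theorem claim7 (k : nat) (hk : (2 <= k)%N) :
  exists (V : finType) (o : V -> V -> V -> int),
    #|V| = (k ^ 2)%N /\ partial_orientation o /\
       [/\
        (* (i) *)
        (forall a b c d : V, pairwise_distinct4 a b c d ->
           exists x y z : V, [/\ x \in [:: a; b; c; d], y \in [:: a; b; c; d],
             z \in [:: a; b; c; d], pairwise_distinct3 x y z & o x y z = 0]),
        (* (ii) *)
        (forall A B C D : V, pairwise_distinct4 A B C D ->
           o A B D = 1 -> o B C D = 1 -> o C A D = 1 -> o A B C = 1),
        (* (iii) *)
        (forall A B C D : V, pairwise_distinct4 A B C D ->
           o A B C = 0 -> o A B D = 0 -> o A C D != 0 -> o B C D != 0 ->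
           o A C D = o B C D) &
        (* (iv) *)
        ((exists S : {set V}, null_set o S /\ #|S| = (2 * k - 1)%N) /\
         (forall S : {set V}, null_set o S -> (#|S| <= 2 * k - 1)%N))].
Proof.
have k0 : (0 < k)%N by lia.
exists (P2 k), (ori (@Eg k)).
split; first by rewrite card_prod card_ord mulnn.
split; first exact: ori_po.
have anti := @Eg_anti k.
split.
- move=> a b c d /and5P[ab ac ad bc /andP[bd cd]].
  have := ori_i anti a b c d; case/or4P => /eqP h.
  + by exists a, b, c; rewrite !inE !eqxx ?orbT /pairwise_distinct3 ab bc ac.
  + by exists a, b, d; rewrite !inE !eqxx ?orbT /pairwise_distinct3 ab bd ad.
  + by exists a, c, d; rewrite !inE !eqxx ?orbT /pairwise_distinct3 ac cd ad.
  + by exists b, c, d; rewrite !inE !eqxx ?orbT /pairwise_distinct3 bc cd bd.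
- by move=> A B C D _; apply: ori_ii.
- by move=> A B C D _ _ _; apply: ori_iii.
split; last by move=> S nS; apply: bound.
pose i0 : 'I_k := Ordinal k0.
exists (setX [set i0] [set: 'I_k] :|: setX [set: 'I_k] [set i0]).
split.
  have lem : forall x y : P2 k, x \in setX [set i0] [set: 'I_k] :|: setX [set: 'I_k] [set i0] ->
     Eg x y -> (x.1 + x.2 < y.1 + y.2)%N.
    move=> [a b] [c d]; rewrite !inE /Eg /= andbT => /orP[] /eqP -> /=; lia.
  have cf : forall x y z, x \in setX [set i0] [set: 'I_k] :|: setX [set: 'I_k] [set i0] ->
     y \in setX [set i0] [set: 'I_k] :|: setX [set: 'I_k] [set i0] ->
     z \in setX [set i0] [set: 'I_k] :|: setX [set: 'I_k] [set i0] -> cyc (@Eg k) x y z = false.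
    move=> x y z xS yS zS; apply/negP => /and3P[e1 e2 e3].
    have := lem _ _ xS e1; have := lem _ _ yS e2; have := lem _ _ zS e3.
    case: x y z {xS yS zS e1 e2 e3} => [a b] [c d] [e f] /=; lia.
  move=> x y z xS yS zS _.
  by rewrite /ori (cf x y z) // (cf z y x).
rewrite cardsU !cardsX !cards1 !cardsT card_ord.
have -> : setX [set i0] [set: 'I_k] :&: setX [set: 'I_k] [set i0] = setX [set i0] [set i0].
  by apply/setP => x; rewrite !inE andbT.
rewrite cardsX !cards1; lia.
Qed.
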